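(* Let $X=[\mathbf x_1,\ldots,\mathbf x_p]\in\mathbb R^{n\times p}$ with $\|\mathbf x_i\|_2\neq0$ for all $i$, $\mathbf y\in\mathbb R^n$, $\lambda\ge0$, and $f(\boldsymbol\beta)=\frac12\|X\boldsymbol\beta-\mathbf y\|_2^2+\lambda\|\boldsymbol\beta\|_1$. Generate sequences as follows. Set $\mathbf s^0=\mathbf 0$ and $\boldsymbol\beta^0=\mathbf 0$. For $k=1,2,\ldots$: first compute $\boldsymbol\beta^k$ by one cyclic pass of coordinate descent started from $\mathbf s^{k-1}$, i.e. for $i=1,\ldots,p$, $$\beta_i^k=\arg\min_{\beta\in\mathbb R} f([\beta_1^k,\ldots,\beta_{i-1}^k,\beta,s_{i+1}^{k-1},\ldots,s_p^{k-1}]^T);$$ then set a history point $\mathbf h^k$, where either $\mathbf h^k=\mathbf s^{k-1}$ for all $k$ (scheme CD+SRRC) or $\mathbf h^k=\boldsymbol\beta^{k-1}$ for all $k$ (scheme CD+SRRT); let $\alpha^k$ be a minimizer over $\alpha\in\mathbb R$ of $f((1-\alpha)\mathbf h^k+\alpha\boldsymbol\beta^k)$, and set $\mathbf s^k=(1-\alpha^k)\mathbf h^k+\alpha^k\boldsymbol\beta^k$. Then for either scheme, for all $k\ge1$, $$f(\mathbf s^{k-1})\ge f(\boldsymbol\beta^k)\ge f(\mathbf s^k)\ge f(\boldsymbol\beta^{k+1}).$$ Moreover, if $f(\mathbf s^{k-1})=f(\boldsymbol\beta^k)$, then $\mathbf s^{k-1}=\boldsymbol\beta^k$ and $f(\boldsymbol\beta^k)=\min_{\boldsymbol\beta}f(\boldsymbol\beta)$.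 Consequently, $\lim_{k\to\infty}f(\boldsymbol\beta^k)=\min_{\boldsymbol\beta}f(\boldsymbol\beta)$.
   Context: The coordinate update has the closed form $\beta_i^k=S(\mathbf x_i^T\mathbf y-\sum_{j<i}\mathbf x_i^T\mathbf x_j\beta_j^k-\sum_{j>i}\mathbf x_i^T\mathbf x_j s_j^{k-1},\lambda)/\|\mathbf x_i\|_2^2$, where $S(x,\lambda)=x-\lambda$ if $x>\lambda$, $x+\lambda$ if $x<-\lambda$, and $0$ if $|x|\le\lambda$. *)

(* Defs.v *)
From HB Require Import structures.
From mathcomp Require Import all_boot all_order all_algebra.
From mathcomp Require Import all_classical all_reals all_analysis.
Set Implicit Arguments. Unset Strict Implicit. Unset Printing Implicit Defensive.
Import Order.TTheory GRing.Theory Num.Theory.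
Local Open Scope ring_scope.

Definition sqnorm2 (R : realType) (n : nat) (v : 'cV[R]_n) : R :=
  \sum_(j < n) (v j 0) ^+ 2.

Definition norm1 (R : realType) (p : nat) (b : 'cV[R]_p) : R :=
  \sum_(i < p) `|b i 0|.

Definition lasso (R : realType) (n p : nat) (X : 'M[R]_(n, p)) (y : 'cV[R]_n)
  (lam : R) (b : 'cV[R]_p) : R :=
  2^-1 * sqnorm2 (X *m b - y) + lam * norm1 b.

Definition cd_point (R : realType) (p : nat) (b s : 'cV[R]_p) (i : 'I_p) (t : R)
  : 'cV[R]_p :=
  \col_(j < p) (if (j < i)%N then b j 0 else if j == i then t else s j 0).

(* Main.v *)
Require Import Defs.
From HB Require Import structures.
From mathcomp Require Import all_boot all_order all_algebra.
From mathcomp Require Import all_classical all_reals all_analysis.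
From mathcomp Require Import ring lra.
Import Order.TTheory GRing.Theory Num.Theory.
Import numFieldNormedType.Exports.
Local Open Scope classical_set_scope.
Local Open Scope ring_scope.

Lemma cluster_exists (R : realType) p (B : 'I_p -> R) (vk : nat -> 'rV[R]_p) :
  (forall k i, `|vk k ord0 i| <= B i) ->
  exists v : 'rV[R]_p, forall (N : set 'rV[R]_p) N0, nbhs v N -> exists k, (N0 <= k)%N /\ N (vk k).
Proof.
move=> hB.
pose K := [set v : 'rV[R]_p | forall i, (fun i => `[- B i, B i]%classic) i (v ord0 i)].
have hK : compact K.
  by apply: rV_compact => i; exact: segment_compact.
have FK : (vk @ \oo) K.
  exists 0%N => // k _ i /=; rewrite in_itv /= -ler_norml; exact: hB.
have [v [_ cv]] := hK _ _ FK.
exists v => N N0 hN.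
have hA : (vk @ \oo) [set x | exists k, (N0 <= k)%N /\ x = vk k].
  by exists N0 => // k /= hk; exists k.
have [x [[k [hk ->]] hx]] := cv _ _ hA hN.
by exists k.
Qed.

Lemma nbhs_cts (R : realType) p (g : 'rV[R]_p -> R) (v : 'rV[R]_p) e :
  continuous g -> 0 < e -> nbhs v [set x | `|g v - g x| < e].
Proof.
move=> hg he.
have := hg v; move/cvgrPdist_lt => /(_ e he).
done.
Qed.

Lemma seq_cvg (R : realType) (u : nat -> R) (l : R) :
  (forall e, 0 < e -> exists N, forall k, (N <= k)%N -> `|l - u k| < e) -> u @ \oo --> l.
Proof.
move=> h; apply/cvgrPdist_lt => e he.
have [N hN] := h e he.
by exists N => // k /= hk; exact: hN.
Qed.

Section Lasso.
Variables (R : realType) (n p : nat) (X : 'M[R]_(n, p)) (y : 'cV[R]_n) (lam : R).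
Hypothesis lam0 : 0 <= lam.

Definition zr (u : 'I_p -> R) (r : 'I_n) := \sum_j X r j * u j - y r 0.
Definition FF (u : 'I_p -> R) := 2^-1 * \sum_r (zr u r) ^+ 2 + lam * \sum_j `|u j|.
Definition cc (i : 'I_p) := \sum_r (X r i) ^+ 2.
Definition gg (i : 'I_p) (u : 'I_p -> R) := \sum_r X r i * zr u r.
Definition upd (u : 'I_p -> R) (i : 'I_p) (t : R) := fun j => if j == i then t else u j.

Lemma lassoE b : lasso X y lam b = FF (fun j => b j 0).
Proof.
rewrite /lasso /FF /sqnorm2 /norm1 /zr; congr (_ * _ + _).
by apply: eq_bigr => r _; rewrite !mxE; congr ((_ - _) ^+ 2); apply: eq_bigr => j _; rewrite mxE.
Qed.

Lemma zr_upd u i t r : zr (upd u i t) r = zr u r + X r i * (t - u i).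
Proof.
rewrite /zr (bigD1 i) //= [in RHS](bigD1 i) //= /upd eqxx.
have -> : \sum_(j | j != i) X r j * (if j == i then t else u j) = \sum_(j | j != i) X r j * u j.
  by apply: eq_bigr => j /negbTE ->.
ring.
Qed.

Lemma FF_upd u i t : FF (upd u i t) =
  FF u + (t - u i) * gg i u + 2^-1 * cc i * (t - u i) ^+ 2 + lam * (`|t| - `|u i|).
Proof.
rewrite /FF /gg /cc.
have -> : \sum_r zr (upd u i t) r ^+ 2 = \sum_r (zr u r ^+ 2 + 2 * (t - u i) * (X r i * zr u r) + (t - u i) ^+ 2 * X r i ^+ 2).
  by apply: eq_bigr => r _; rewrite zr_upd; ring.
rewrite !big_split /= -!mulr_sumr.
rewrite (bigD1 i) //= [in RHS](bigD1 i) //= /upd eqxx.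
have -> : \sum_(j | j != i) `|if j == i then t else u j| = \sum_(j | j != i) `|u j|.
  by apply: eq_bigr => j /negbTE ->.
by field.
Qed.

Lemma FF_ge0 u : 0 <= FF u.
Proof.
rewrite /FF; apply: addr_ge0; apply: mulr_ge0 => //.
- by apply: sumr_ge0 => r _; exact: sqr_ge0.
- by apply: sumr_ge0 => r _.
Qed.

Definition soft (a : R) := (a - lam + `|a - lam|) / 2 + (a + lam - `|a + lam|) / 2.

Lemma soft_cases a : (lam < a /\ soft a = a - lam) \/ (a < - lam /\ soft a = a + lam)
  \/ (`|a| <= lam /\ soft a = 0).
Proof.
have l0 := lam0.
have [h1|h1] := ltrP lam a.
  left; split => //; rewrite /soft.
  have -> : `|a - lam| = a - lam by apply: gtr0_norm; lra.
  have -> : `|a + lam| = a + lam by apply: ger0_norm; lra.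
  by field.
have [h2|h2] := ltrP a (- lam).
  right; left; split => //; rewrite /soft.
  have -> : `|a - lam| = - (a - lam) by apply: ltr0_norm; lra.
  have -> : `|a + lam| = - (a + lam) by apply: ltr0_norm; lra.
  by field.
right; right; split; first by rewrite ler_norml; lra.
rewrite /soft.
have -> : `|a - lam| = - (a - lam) by apply: ler0_norm; lra.
have -> : `|a + lam| = a + lam by apply: ger0_norm; lra.
by field.
Qed.

Lemma soft0 a : lam = 0 -> soft a = a.
Proof. rewrite /soft => ->; rewrite !subr0 !addr0; by field. Qed.

Lemma quad_min (c a t : R) : 0 < c ->
  c / 2 * (soft a / c) ^+ 2 - a * (soft a / c) + lam * `|soft a / c| + c / 2 * (t - soft a / c) ^+ 2
  <= c / 2 * t ^+ 2 - a * t + lam * `|t|.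
Proof.
move=> c0.
have l0 := lam0.
set t0 := soft a / c.
have ct0 : c * t0 = soft a by rewrite /t0 mulrC divfK // gt_eqF.
have nt1 : t <= `|t| by exact: ler_norm.
have nt2 : - t <= `|t| by rewrite -normrN; exact: ler_norm.
have e1 : c * t0 * t0 = soft a * t0 by rewrite ct0.
have e2 : c * t0 * t = soft a * t by rewrite ct0.
case: (soft_cases a) => [[h s]|[[h s]|[h s]]]; rewrite s in ct0 e1 e2.
- have t0p : 0 <= t0 by rewrite /t0 s divr_ge0 //; lra.
  rewrite (ger0_norm t0p).
  have : lam * t <= lam * `|t| by rewrite ler_wpM2l.
  nra.
- have t0p : t0 <= 0 by rewrite /t0 s mulr_le0_ge0 // ?invr_ge0; lra.
  rewrite (ler0_norm t0p).
  have : lam * (- t) <= lam * `|t| by rewrite ler_wpM2l.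
  nra.
- have t00 : t0 = 0 by rewrite /t0 s mul0r.
  rewrite t00 normr0.
  have : `|a * t| <= lam * `|t| by rewrite normrM ler_wpM2r.
  have : a * t <= `|a * t| by exact: ler_norm.
  rewrite subr0 expr0n /= !mulr0 subr0 addr0 add0r.
  lra.
Qed.

Lemma subgrad (c a d : R) : 0 < c ->
  0 <= (c * (soft a / c) - a) * d + lam * (`|soft a / c + d| - `|soft a / c|).
Proof.
move=> c0.
have l0 := lam0.
set t0 := soft a / c.
have ct0 : c * t0 = soft a by rewrite /t0 mulrC divfK // gt_eqF.
rewrite ct0.
case: (soft_cases a) => [[h s]|[[h s]|[h s]]]; rewrite s.
- have t0p : 0 <= t0 by rewrite /t0 s divr_ge0 //; lra.
  rewrite (ger0_norm t0p).
  have : lam * (t0 + d) <= lam * `|t0 + d| by rewrite ler_wpM2l // ler_norm.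
  nra.
- have t0p : t0 <= 0 by rewrite /t0 s mulr_le0_ge0 // ?invr_ge0; lra.
  rewrite (ler0_norm t0p).
  have : lam * (- (t0 + d)) <= lam * `|t0 + d| by rewrite ler_wpM2l // -normrN ler_norm.
  nra.
- have t00 : t0 = 0 by rewrite /t0 s mul0r.
  rewrite t00 normr0 add0r.
  have : `|a * d| <= lam * `|d| by rewrite normrM ler_wpM2r.
  have : a * d <= `|a * d| by exact: ler_norm.
  rewrite !add0r subr0 mulNr. lra.
Qed.

Hypothesis cpos : forall i, 0 < cc i.

Definition mstep i u := soft (cc i * u i - gg i u) / cc i.

Lemma upd_min u i t :
  FF (upd u i (mstep i u)) + cc i / 2 * (t - mstep i u) ^+ 2 <= FF (upd u i t).
Proof.
have E : forall t', FF (upd u i t') = (FF u - u i * gg i u + cc i / 2 * u i ^+ 2 - lam * `|u i|)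
   + (cc i / 2 * t' ^+ 2 - (cc i * u i - gg i u) * t' + lam * `|t'|).
  by move=> tt; rewrite FF_upd; field.
rewrite !E.
have := quad_min (cc i) (cc i * u i - gg i u) t (cpos i).
rewrite /mstep; lra.
Qed.

Definition step (m : nat) (u : 'I_p -> R) : 'I_p -> R :=
  fun j => if (j : nat) == m then mstep j u else u j.

Fixpoint crec (m : nat) (u : 'I_p -> R) : 'I_p -> R :=
  match m with 0 => u | m'.+1 => step m' (crec m' u) end.

Lemma step_upd (i : 'I_p) u : step i u = upd u i (mstep i u).
Proof.
apply: funext => j; rewrite /step /upd.
case: eqP => [/ord_inj -> | h]; first by rewrite eqxx.
by case: eqP => // hj; case: h; rewrite hj.
Qed.

Lemma step_large m u : (p <= m)%N -> step m u = u.
Proof.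
move=> h; apply: funext => j; rewrite /step.
case: eqP => // hj; have := ltn_ord j; rewrite hj => /leq_trans/(_ h); by rewrite ltnn.
Qed.

Lemma upd_id u i : upd u i (u i) = u.
Proof. by apply: funext => j; rewrite /upd; case: eqP => // ->. Qed.

Lemma step_dec m u : FF (step m u) <= FF u /\ (FF (step m u) = FF u -> step m u = u).
Proof.
case: (ltnP m p) => hm; last by rewrite step_large.
pose i := Ordinal hm.
have -> : m = i by [].
rewrite step_upd.
have h := upd_min u i (u i); rewrite upd_id in h.
have hc := cpos i.
have hs : 0 <= cc i / 2 * (u i - mstep i u) ^+ 2.
  by apply: mulr_ge0; [apply: divr_ge0; lra| exact: sqr_ge0].
split; first by lra.
move=> he.
have h0 : cc i / 2 * (u i - mstep i u) ^+ 2 = 0 by lra.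
have hm0 : mstep i u = u i.
  move/eqP: h0; rewrite mulf_eq0 sqrf_eq0 subr_eq0 => /orP[|/eqP //].
  by rewrite mulf_eq0 invr_eq0 => /orP[] /eqP; lra.
by rewrite hm0 upd_id.
Qed.

Lemma crec_le m k u : FF (crec (m + k) u) <= FF (crec m u).
Proof.
elim: k => [|k IH]; first by rewrite addn0.
by rewrite addnS /=; apply: le_trans IH; case: (step_dec (m + k) (crec (m + k) u)).
Qed.

Lemma crec_fix u : FF (crec p u) = FF u -> forall m, (m <= p)%N -> crec m u = u.
Proof.
move=> he; elim=> [//|m IH] hm.
have hm' : (m <= p)%N by apply: ltnW.
rewrite /= IH //.
case: (step_dec m u) => h1 h2; apply: h2.
have := crec_le m.+1 (p - m.+1) u; rewrite subnKC // /= IH // => h3.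
have := crec_le 0 m.+1 u; rewrite add0n /=.
lra.
Qed.

Lemma fixed_coord u : FF (crec p u) = FF u -> forall i : 'I_p, mstep i u = u i.
Proof.
move=> he i.
have h1 := @crec_fix u he _ (ltn_ord i).
have h2 := @crec_fix u he _ (ltnW (ltn_ord i)).
rewrite /= h2 in h1.
have := congr1 (fun f => f i) h1; by rewrite /step eqxx.
Qed.

Lemma zr_diff u b r : zr b r = zr u r + \sum_j X r j * (b j - u j).
Proof.
rewrite /zr.
have -> : \sum_j X r j * b j = \sum_j X r j * u j + \sum_j X r j * (b j - u j).
  by rewrite -big_split; apply: eq_bigr => j _ /=; ring.
ring.
Qed.

Lemma glob u : (forall i, mstep i u = u i) -> forall b, FF u <= FF b.
Proof.
move=> hf b.
have l0 := lam0.
have hx : \sum_r zr u r * (\sum_j X r j * (b j - u j)) = \sum_j (b j - u j) * gg j u.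
  under eq_bigr do rewrite big_distrr.
  rewrite exchange_big /=; apply: eq_bigr => j _.
  rewrite /gg big_distrr; apply: eq_bigr => r _ /=; ring.
have hq : \sum_r zr u r ^+ 2 + 2 * \sum_j (b j - u j) * gg j u <= \sum_r zr b r ^+ 2.
  rewrite -hx mulr_sumr -big_split /=; apply: ler_sum => r _.
  rewrite (zr_diff u b r).
  set w := \sum_j _.
  have := sqr_ge0 w; nra.
have hs : forall j, 0 <= (b j - u j) * gg j u + lam * (`|b j| - `|u j|).
  move=> j.
  have := subgrad (cc j) (cc j * u j - gg j u) (b j - u j) (cpos j).
  have -> : soft (cc j * u j - gg j u) / cc j = u j by rewrite -[RHS]hf.
  have -> : u j + (b j - u j) = b j by ring.
  have -> : cc j * u j - (cc j * u j - gg j u) = gg j u by ring.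
  by rewrite mulrC.
have hsum : 0 <= \sum_j (b j - u j) * gg j u + lam * (\sum_j `|b j| - \sum_j `|u j|).
  rewrite -sumrB mulr_sumr -big_split /=; exact: sumr_ge0 => j _.
rewrite /FF.
lra.
Qed.

Lemma coord_unique u i t0 : (forall t, FF (upd u i t0) <= FF (upd u i t)) -> t0 = mstep i u.
Proof.
move=> h.
have h1 := upd_min u i t0.
have h2 := h (mstep i u).
have hc := cpos i.
have hs : 0 <= cc i / 2 * (t0 - mstep i u) ^+ 2.
  by apply: mulr_ge0; [apply: divr_ge0; lra| exact: sqr_ge0].
have h0 : cc i / 2 * (t0 - mstep i u) ^+ 2 = 0 by lra.
move/eqP: h0; rewrite mulf_eq0 sqrf_eq0 subr_eq0 => /orP[|/eqP //].
by rewrite mulf_eq0 invr_eq0 => /orP[] /eqP; lra.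
Qed.

Lemma zr_shift u nn r : (forall r, \sum_j X r j * nn j = 0) ->
  zr (fun j => u j + nn j) r = zr u r.
Proof.
move=> h; rewrite /zr.
have -> : \sum_j X r j * (u j + nn j) = \sum_j X r j * u j + \sum_j X r j * nn j.
  by rewrite -big_split; apply: eq_bigr => j _ /=; ring.
by rewrite h addr0.
Qed.

Lemma FF_shift u nn : lam = 0 -> (forall r, \sum_j X r j * nn j = 0) ->
  FF (fun j => u j + nn j) = FF u.
Proof.
move=> l0 h; rewrite /FF l0 !mul0r !addr0; congr (_ * _).
by apply: eq_bigr => r _; rewrite zr_shift.
Qed.

Lemma mstep_shift u nn i : lam = 0 -> (forall r, \sum_j X r j * nn j = 0) ->
  mstep i (fun j => u j + nn j) = mstep i u + nn i.
Proof.
move=> l0 h; rewrite /mstep.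
have -> : gg i (fun j => u j + nn j) = gg i u.
  by rewrite /gg; apply: eq_bigr => r _; rewrite zr_shift.
rewrite !soft0 //.
have := cpos i; rewrite lt0r => /andP[hc _].
by field.
Qed.

Lemma crec_shift u nn m : lam = 0 -> (forall r, \sum_j X r j * nn j = 0) ->
  crec m (fun j => u j + nn j) = (fun j => crec m u j + nn j).
Proof.
move=> l0 h; elim: m => [//|m IH] /=.
rewrite IH; apply: funext => j; rewrite /step.
case: eqP => // _.
by rewrite mstep_shift.
Qed.

Definition uv (v : 'rV[R]_p) : 'I_p -> R := fun j => v ord0 j.
Definition cts (g : 'rV[R]_p -> R) := continuous g.
Lemma cts_coord j : cts (fun v => v ord0 j).
Proof. exact: coord_continuous. Qed.
Lemma cts_cst c : cts (fun _ => c).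
Proof. exact: cst_continuous. Qed.
Lemma cts_add f g : cts f -> cts g -> cts (fun v => f v + g v).
Proof. move=> hf hg x. have := @continuousD _ _ _ f g x (hf x) (hg x). exact. Qed.
Lemma cts_mul f g : cts f -> cts g -> cts (fun v => f v * g v).
Proof. move=> hf hg x. have := @continuousM _ _ f g x (hf x) (hg x). exact. Qed.
Lemma cts_opp f : cts f -> cts (fun v => - f v).
Proof. move=> hf x. have := @continuousN _ _ _ f x (hf x). exact. Qed.
Lemma cts_norm f : cts f -> cts (fun v => `|f v|).
Proof. move=> hf x. apply: continuous_comp; [exact: hf | exact: norm_continuous]. Qed.
Lemma cts_sum m (F : 'I_m -> 'rV[R]_p -> R) : (forall i, cts (F i)) -> cts (fun v => \sum_(i < m) F i v).
Proof.
elim: m F => [|m IH] F hF.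
  under [fun v => _]funext do rewrite big_ord0; exact: cts_cst.
under [fun v => _]funext do rewrite big_ord_recr /=.
apply: cts_add; last exact: hF.
by apply: (IH (fun i => F (widen_ord (leqnSn m) i))) => i.
Qed.

Lemma cts_zr U : (forall j, cts (fun v => U v j)) -> forall r, cts (fun v => zr (U v) r).
Proof.
move=> hU r; rewrite /zr.
apply: cts_add; last exact: cts_cst.
apply: (cts_sum _ (fun j v => X r j * U v j)) => j.
apply: cts_mul; [exact: cts_cst | exact: hU].
Qed.

Lemma cts_FF U : (forall j, cts (fun v => U v j)) -> cts (fun v => FF (U v)).
Proof.
move=> hU; rewrite /FF.
apply: cts_add; apply: cts_mul; try exact: cts_cst.
  apply: (cts_sum _ (fun r v => zr (U v) r ^+ 2)) => r.
  have -> : (fun v => zr (U v) r ^+ 2) = (fun v => zr (U v) r * zr (U v) r).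
    by apply: funext => v; rewrite expr2.
  by apply: cts_mul; apply: cts_zr.
apply: (cts_sum _ (fun j v => `|U v j|)) => j.
by apply: cts_norm.
Qed.

Lemma cts_gg U i : (forall j, cts (fun v => U v j)) -> cts (fun v => gg i (U v)).
Proof.
move=> hU; rewrite /gg.
apply: (cts_sum _ (fun r v => X r i * zr (U v) r)) => r.
by apply: cts_mul; [exact: cts_cst | apply: cts_zr].
Qed.

Lemma cts_soft f : cts f -> cts (fun v => soft (f v)).
Proof.
move=> hf; rewrite /soft.
apply: cts_add; apply: cts_mul; try exact: cts_cst.
  apply: cts_add; [apply: cts_add; [exact: hf| exact: cts_cst]|].
  by apply: cts_norm; apply: cts_add; [exact: hf| exact: cts_cst].
apply: cts_add; [apply: cts_add; [exact: hf| exact: cts_cst]|].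
by apply: cts_opp; apply: cts_norm; apply: cts_add; [exact: hf| exact: cts_cst].
Qed.

Lemma cts_mstep U i : (forall j, cts (fun v => U v j)) -> cts (fun v => mstep i (U v)).
Proof.
move=> hU; rewrite /mstep.
apply: cts_mul; last exact: cts_cst.
apply: cts_soft; apply: cts_add.
  by apply: cts_mul; [exact: cts_cst| exact: hU].
by apply: cts_opp; apply: cts_gg.
Qed.

Lemma cts_crec m j : cts (fun v => crec m (uv v) j).
Proof.
elim: m j => [|m IH] j /=; first exact: cts_coord.
rewrite /step; case: eqP => _; last exact: IH.
exact: (cts_mstep (fun v => crec m (uv v))).
Qed.

Lemma le_sum_term m (G : 'I_m -> R) i : (forall j, 0 <= G j) -> G i <= \sum_j G j.
Proof. by move=> h; rewrite (bigD1 i) //= lerDl; apply: sumr_ge0. Qed.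

Lemma abs_le_sq (z : R) : `|z| <= 1 + z ^+ 2.
Proof.
case: (lerP 0 z) => hz.
  rewrite ger0_norm //; nra.
rewrite ltr0_norm //; nra.
Qed.

Lemma main (scheme : bool) (beta s : nat -> 'cV[R]_p) (alpha : nat -> R) :
  s 0%N = 0 -> beta 0%N = 0 ->
  (forall (k : nat) (i : 'I_p), (0 < k)%N -> forall t : R,
      lasso X y lam (cd_point (beta k) (s k.-1) i (beta k i 0))
      <= lasso X y lam (cd_point (beta k) (s k.-1) i t)) ->
  (forall k : nat, (0 < k)%N ->
     let h := if scheme then s k.-1 else beta k.-1 in
     (forall a : R,
        lasso X y lam ((1 - alpha k) *: h + alpha k *: beta k)
        <= lasso X y lam ((1 - a) *: h + a *: beta k))
     /\ s k = (1 - alpha k) *: h + alpha k *: beta k) ->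
  (forall k : nat, (0 < k)%N ->
     lasso X y lam (beta k) <= lasso X y lam (s k.-1)
     /\ lasso X y lam (s k) <= lasso X y lam (beta k)
     /\ lasso X y lam (beta k.+1) <= lasso X y lam (s k))
  /\ (forall k : nat, (0 < k)%N ->
        lasso X y lam (s k.-1) = lasso X y lam (beta k) ->
        s k.-1 = beta k /\ (forall b, lasso X y lam (beta k) <= lasso X y lam b))
  /\ (exists bstar : 'cV[R]_p,
        (forall b, lasso X y lam bstar <= lasso X y lam b)
        /\ (fun k => lasso X y lam (beta k)) @ \oo --> lasso X y lam bstar).
Proof.
move=> Hs0 Hb0 Hcd Hsr.
have l0 := lam0.
pose sv : nat -> 'I_p -> R := fun k j => s k j 0.
pose bv : nat -> 'I_p -> R := fun k j => beta k j 0.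
have cdE : forall k (i : 'I_p) t, (fun j => cd_point (beta k) (s k.-1) i t j 0)
    = upd (fun j => if (j < i)%N then bv k j else sv k.-1 j) i t.
  move=> k i t; apply: funext => j; rewrite /cd_point /upd mxE.
  case: eqP => [->|hji]; first by rewrite ltnn.
  by case: (j < i)%N => //; case: eqP => // /ord_inj.
have HA : forall k, (0 < k)%N -> crec p (sv k.-1) = bv k.
  move=> k hk.
  have hP : forall m, (m <= p)%N ->
      crec m (sv k.-1) = (fun j => if (j < m)%N then bv k j else sv k.-1 j).
    elim=> [_|m IH hm]; first by apply: funext => j.
    have -> : crec m.+1 (sv k.-1) = step m (crec m (sv k.-1)) by [].
    rewrite IH; last exact: ltnW.
    apply: funext => j; rewrite /step.
    case: eqP => hjm.
      rewrite -hjm ltnSn; symmetry; apply: coord_unique => t.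
      by have := Hcd k j hk t; rewrite !lassoE !cdE.
    have -> : (j < m.+1)%N = (j < m)%N by rewrite ltnS leq_eqVlt; case: eqP.
    done.
  by rewrite (hP p (leqnn p)); apply: funext => j; rewrite ltn_ord.
have HB : forall k, (0 < k)%N -> FF (bv k) <= FF (sv k.-1).
  by move=> k hk; rewrite -(HA k hk); have := crec_le 0 p (sv k.-1); rewrite add0n.
have HC : forall k, (0 < k)%N -> FF (sv k) <= FF (bv k).
  move=> k hk; case: (Hsr k hk) => hmin hs.
  by have := hmin 1; rewrite subrr scale0r add0r scale1r -hs !lassoE.
split.
  move=> k hk; rewrite !lassoE; split; first exact: HB.
  by split; [exact: HC | exact: (HB k.+1)].
split.
  move=> k hk he; rewrite !lassoE in he.
  have hf : FF (crec p (sv k.-1)) = FF (sv k.-1) by rewrite HA.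
  have hfix := crec_fix _ hf _ (leqnn p).
  have hbs : bv k = sv k.-1 by rewrite -(HA k hk).
  split.
    apply/matrixP => i j; rewrite (ord1 j).
    by have := congr1 (fun f => f i) hbs.
  move=> b; rewrite !lassoE; change (FF (bv k) <= FF (fun j => b j 0)); rewrite hbs.
  exact: (glob _ (fixed_coord _ hf)).

have Fsv0 : forall k, FF (sv k) <= FF (sv 0%N).
  elim=> // k IH; apply: (le_trans (HC k.+1 isT)); exact: (le_trans (HB k.+1 isT) IH).
have Mb : forall k m, (0 < k)%N -> FF (bv (k + m)%N) <= FF (bv k).
  move=> k m hk; elim: m => [|m IH]; first by rewrite addn0.
  apply: (le_trans _ IH); rewrite addnS.
  apply: (le_trans (HB (k + m).+1 isT)).
  by apply: HC; rewrite addn_gt0 hk.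
have HW : exists (w : nat -> 'I_p -> R) (B : 'I_p -> R),
    (forall k, FF (w k) = FF (sv k)) /\ (forall k, FF (crec p (w k)) = FF (bv k.+1))
    /\ (forall k j, `|w k j| <= B j).
  have [lz|lnz] := eqVneq lam 0.
    pose P := pinvmx (X^T).
    pose w : nat -> 'I_p -> R := fun k j => ((X *m s k)^T *m P) ord0 j.
    have hX : forall k r, \sum_j X r j * (sv k j - w k j) = 0.
      move=> k r.
      have hsub : ((X *m s k)^T <= X^T)%MS by rewrite trmx_mul submxMl.
      have H := mulmxKpV hsub.
      have := congr1 (fun M : 'M[R]_(1, n) => M ord0 r) H; rewrite /= => H2.
      rewrite [Z in _ = Z]mxE [Z in _ = Z]mxE in H2.
      rewrite [Z in Z = _]mxE in H2.
      under eq_bigr do rewrite mulrBr.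
      rewrite sumrB; apply/eqP; rewrite subr_eq0; apply/eqP.
      rewrite -H2; apply: eq_bigr => j _; rewrite mulrC; congr (_ * _); by rewrite mxE.
    have hdec : forall k, sv k = (fun j => w k j + (sv k j - w k j)).
      by move=> k; apply: funext => j; rewrite addrC subrK.
    pose B := fun j : 'I_p => \sum_r (`|y r 0| + 1 + 2 * FF (sv 0%N)) * `|P r j|.
    exists w, B; split.
      by move=> k; rewrite [in RHS](hdec k) (FF_shift (w k) (fun j => sv k j - w k j) lz (hX k)).
    split.
      move=> k; rewrite -(HA k.+1 isT) /= [in RHS](hdec k).
      rewrite (crec_shift (w k) (fun j => sv k j - w k j) p lz (hX k)).
      by rewrite (FF_shift _ (fun j => sv k j - w k j) lz (hX k)).
    move=> k j.
    rewrite /w mxE.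
    apply: (le_trans (ler_norm_sum _ _ _)).
    apply: ler_sum => r _.
    rewrite normrM; apply: ler_wpM2r => //.
    rewrite mxE.
    have hz : zr (sv k) r = (X *m s k) r ord0 - y r 0 by rewrite /zr mxE.
    have hFF : zr (sv k) r ^+ 2 <= 2 * FF (sv 0%N).
      have h1 := le_sum_term _ (fun r0 => zr (sv k) r0 ^+ 2) r (fun r0 => sqr_ge0 _).
      have h2 := Fsv0 k.
      move: h1 h2; rewrite /FF lz mul0r addr0 /=; lra.
    have h3 := abs_le_sq (zr (sv k) r).
    have h4 : `|(X *m s k) r ord0| <= `|zr (sv k) r| + `|y r 0|.
      have -> : (X *m s k) r ord0 = zr (sv k) r + y r 0 by rewrite hz subrK.
      exact: ler_normD.
    lra.
  have lp : 0 < lam by rewrite lt0r lnz.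
  exists sv, (fun _ => FF (sv 0%N) / lam); split => //; split.
    by move=> k; rewrite (HA k.+1 isT).
  move=> k j; rewrite ler_pdivlMr //.
  have h1 : `|sv k j| <= \sum_j0 `|sv k j0| by exact: (le_sum_term _ (fun j0 => `|sv k j0|) j (fun _ => normr_ge0 _)).
  have h2 : 0 <= 2^-1 * \sum_r zr (sv k) r ^+ 2.
    by apply: mulr_ge0 => //; apply: sumr_ge0 => r _; exact: sqr_ge0.
  have h3 : lam * `|sv k j| <= lam * \sum_j0 `|sv k j0| by rewrite ler_wpM2l.
  have h4 := Fsv0 k.
  move: h2 h3 h4; rewrite /FF; lra.
have [w [B [W1 [W2 W3]]]] := HW.
pose vk : nat -> 'rV[R]_p := fun k => \row_j w k j.
have uvk : forall k, uv (vk k) = w k by move=> k; apply: funext => j; rewrite /uv mxE.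
have hvb : forall k i, `|vk k ord0 i| <= B i by move=> k i; rewrite mxE; exact: W3.
have [v hv] := cluster_exists _ _ B vk hvb.
pose G1 := fun x : 'rV[R]_p => FF (uv x).
pose G2 := fun x : 'rV[R]_p => FF (uv x) - FF (crec p (uv x)).
have cG1 : cts G1 by apply: (cts_FF uv) => j; exact: cts_coord.
have cG2 : cts G2.
  apply: cts_add; first exact: cG1.
  apply: cts_opp; apply: (cts_FF (fun x => crec p (uv x))) => j; exact: cts_crec.
have G2k : forall k, G2 (vk k) = FF (sv k) - FF (bv k.+1) by move=> k; rewrite /G2 uvk W1 W2.
have G1k : forall k, G1 (vk k) = FF (sv k) by move=> k; rewrite /G1 uvk W1.
have hd0 : 0 <= G2 v by rewrite /G2 subr_ge0; have := crec_le 0 p (uv v); rewrite add0n.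
have hd : G2 v = 0.
  suff : ~ (0 < G2 v) by move=> hn; apply/eqP; rewrite eq_le hd0 andbT; rewrite leNgt; apply/negP.
  move=> dp.
  set d := G2 v in dp hd0.
  have dE : d = G2 v by [].
  clearbody d.
  have hN := nbhs_cts _ _ G2 v _ cG2 (divr_gt0 dp (ltr0n R 2)).
  have freq : forall N0, exists k, (N0 <= k)%N /\ d / 2 < FF (sv k) - FF (bv k.+1).
    move=> N0; have [k [hk hk2]] := hv _ N0 hN; exists k; split => //.
    rewrite -G2k; move: hk2 => /=; rewrite ltr_norml => /andP[h1 h2]; lra.
  have desc : forall m : nat, exists k, (0 < k)%N /\ FF (bv k) <= FF (bv 1%N) - m%:R * (d / 2).
    elim=> [|m [k [hk hle]]]; first by exists 1%N; rewrite mul0r subr0.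
    have [k' [hk' hd']] := freq k.
    exists k'.+1; split => //.
    have hk'0 : (0 < k')%N by apply: leq_trans hk hk'.
    have e1 := HC k' hk'0.
    have e2 := Mb k (k' - k)%N hk; rewrite subnKC // in e2.
    rewrite -natr1 mulrDl mul1r; lra.
  have hb0 : 0 <= FF (bv 1%N) / (d / 2) by apply: divr_ge0; [exact: FF_ge0 | lra].
  have := archi_boundP hb0; rewrite ltr_pdivrMr; last by lra.
  set M := Num.Def.archi_bound _.
  have [k [_ hk]] := desc M.
  have := FF_ge0 (bv k); lra.
have hf : FF (crec p (uv v)) = FF (uv v) by move: hd; rewrite /G2; lra.
have hopt := glob _ (fixed_coord _ hf).
have colE : (fun j => (\col_j0 uv v j0) j 0) = uv v by apply: funext => j; rewrite mxE.
exists (\col_j uv v j); split.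
  by move=> b; rewrite !lassoE colE; apply: hopt.
apply: seq_cvg => e he.
rewrite lassoE colE.
have [k [_ hk]] := hv _ 0%N (nbhs_cts _ _ G1 v _ cG1 he).
move: hk => /=; rewrite G1k ltr_norml => /andP[hk1 hk2].
exists k.+1 => k' hk'.
rewrite lassoE.
have e1 := hopt (bv k').
have e2 := Mb k.+1 (k' - k.+1)%N isT; rewrite subnKC // in e2.
have e3 := HB k.+1 isT.
rewrite ltr_norml; apply/andP; split; rewrite /G1 in hk1 hk2; change (fun j => beta k' j 0) with (bv k'); simpl in e3; lra.
Qed.
End Lasso.

Theorem theorem3 (R : realType) (n p : nat) (X : 'M[R]_(n, p)) (y : 'cV[R]_n)
  (lam : R) (scheme : bool)
  (beta s : nat -> 'cV[R]_p) (alpha : nat -> R) :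
  (forall i : 'I_p, col i X != 0) ->
  0 <= lam ->
  s 0%N = 0 -> beta 0%N = 0 ->
  (forall (k : nat) (i : 'I_p), (0 < k)%N -> forall t : R,
      lasso X y lam (cd_point (beta k) (s k.-1) i (beta k i 0))
      <= lasso X y lam (cd_point (beta k) (s k.-1) i t)) ->
  (forall k : nat, (0 < k)%N ->
     let h := if scheme then s k.-1 else beta k.-1 in
     (forall a : R,
        lasso X y lam ((1 - alpha k) *: h + alpha k *: beta k)
        <= lasso X y lam ((1 - a) *: h + a *: beta k))
     /\ s k = (1 - alpha k) *: h + alpha k *: beta k) ->
  (forall k : nat, (0 < k)%N ->
     lasso X y lam (beta k) <= lasso X y lam (s k.-1)
     /\ lasso X y lam (s k) <= lasso X y lam (beta k)
     /\ lasso X y lam (beta k.+1) <= lasso X y lam (s k))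
  /\ (forall k : nat, (0 < k)%N ->
        lasso X y lam (s k.-1) = lasso X y lam (beta k) ->
        s k.-1 = beta k /\ (forall b, lasso X y lam (beta k) <= lasso X y lam b))
  /\ (exists bstar : 'cV[R]_p,
        (forall b, lasso X y lam bstar <= lasso X y lam b)
        /\ (fun k => lasso X y lam (beta k)) @ \oo --> lasso X y lam bstar).
Proof.
move=> Hcol Hlam Hs0 Hb0 Hcd Hsr.
have cpos : forall i, 0 < cc R n p X i.
  move=> i; rewrite lt0r; apply/andP; split; last first.
    by apply: sumr_ge0 => r _; exact: sqr_ge0.
  apply/negP => /eqP h0; move/negP: (Hcol i); apply.
  apply/eqP/matrixP => r c; rewrite (ord1 c) !mxE.
  have := @psumr_eq0P _ _ _ _ (fun r _ => sqr_ge0 (X r i)) h0 r isT.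
  by move/eqP; rewrite sqrf_eq0 => /eqP.
exact: (@main R n p X y lam Hlam cpos scheme beta s alpha Hs0 Hb0 Hcd Hsr).
Qed.
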